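(* Let PS1 and PS2 be pure strategies (as in the context) with $m_{PS1}$ finite, and suppose PS2 is equivalent to PS1, i.e. $\Delta_{PS1}(X)=\Delta_{PS2}(X)$ for every $X\in\mathcal{S}_{\mathrm{non}}$. Then for any mixed strategy MS derived from PS1 and PS2, $m_{MS}(X)=m_{PS1}(X)$ for every initial population $X$.
   Context: A fitness function $f$ on a finite set is to be maximised. A metaheuristic generates populations $\Phi_0,\Phi_1,\dots$. Let $\mathcal{S}$ be the finite set of all populations, $\mathcal{S}_{\mathrm{opt}}$ those containing at least one optimal solution, $\mathcal{S}_{\mathrm{non}}=\mathcal{S}\setminus\mathcal{S}_{\mathrm{opt}}$. The sequence is a time-homogeneous Markov chain on $\mathcal{S}$ with transition probabilities $P(X,Y)=\Pr(\Phi_{t+1}=Y\mid\Phi_t=X)$, every state of $\mathcal{S}_{\mathrm{opt}}$ absorbing. The expected hitting time $m(X)\in[0,\infty]$ is the expected number of generations until first entering $\mathcal{S}_{\mathrm{opt}}$ from $\Phi_0=X$ ($m(X)=0$ on $\mathcal{S}_{\mathrm{opt}}$). A pure strategy is such a time-independent transition matrix. PS1, PS2 are pure strategies with transition matrices $P_1,P_2$ on the same $\mathcal{S}$ (with $\mathcal{S}_{\mathrm{opt}}$ absorbing), expected hitting times $m_{PS1},m_{PS2}$. A mixed strategy MS derived from PS1 and PS2 assigns to each $X\in\mathcal{S}$ probabilities $P_X(PS1)\in[0,1]$, $P_X(PS2)=1-P_X(PS1)$, and has transition matrix $P_{MS}(X,Y)=P_X(PS1)P_1(X,Y)+P_X(PS2)P_2(X,Y)$,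 with expected hitting time $m_{MS}$. With $d(X)=m_{PS1}(X)$, for $X\in\mathcal{S}_{\mathrm{non}}$: $\Delta_{PS1}(X)=d(X)-\sum_{Y\in\mathcal{S}_{\mathrm{non}}}P_1(X,Y)d(Y)$, $\Delta_{PS2}(X)=d(X)-\sum_{Y\in\mathcal{S}_{\mathrm{non}}}P_2(X,Y)d(Y)$. *)

(* Defs.v *)
From HB Require Import structures.
From mathcomp Require Import all_boot all_order all_algebra.
From mathcomp Require Import all_classical all_reals all_analysis.
Set Implicit Arguments. Unset Strict Implicit. Unset Printing Implicit Defensive.
Import Order.TTheory GRing.Theory Num.Theory.
Local Open Scope ring_scope.

Definition transition (R : realType) (S : finType) (Sopt : {set S})
    (P : S -> S -> R) : Prop :=
  (forall X Y, 0 <= P X Y) /\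
  (forall X, \sum_(Y : S) P X Y = 1) /\
  (forall X, X \in Sopt -> P X X = 1).

(* surv P Sopt t X = Pr(Phi_0, ..., Phi_t all lie in S_non | Phi_0 = X)
   = Pr(T > t | Phi_0 = X), T the first hitting time of Sopt. *)
Fixpoint surv (R : realType) (S : finType) (Sopt : {set S})
    (P : S -> S -> R) (t : nat) (X : S) : R :=
  match t with
  | 0 => if X \in Sopt then 0 else 1
  | t'.+1 => if X \in Sopt then 0
             else \sum_(Y : S) P X Y * surv Sopt P t' Y
  end.

(* Expected hitting time m(X) = E[T | Phi_0 = X] = sum_{t >= 0} Pr(T > t),
   valued in [0, +oo] (extended reals). It is 0 on Sopt. *)
Definition hitting_time (R : realType) (S : finType) (Sopt : {set S})
    (P : S -> S -> R) (X : S) : \bar R :=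
  (\sum_(0 <= t <oo) (surv Sopt P t X)%:E)%E.

Definition mixed_matrix (R : realType) (S : finType) (pX : S -> R)
    (P1 P2 : S -> S -> R) : S -> S -> R :=
  fun X Y => pX X * P1 X Y + (1 - pX X) * P2 X Y.

Definition drift (R : realType) (S : finType) (Sopt : {set S})
    (d : S -> R) (P : S -> S -> R) (X : S) : R :=
  d X - \sum_(Y in ~: Sopt) P X Y * d Y.

(* Main.v *)
Require Import Defs.
From HB Require Import structures.
From mathcomp Require Import all_boot all_order all_algebra.
From mathcomp Require Import all_classical all_reals all_analysis.
From mathcomp Require Import ring lra.
Import Order.TTheory GRing.Theory Num.Theory.
Set Implicit Arguments. Unset Strict Implicit. Unset Printing Implicit Defensive.
Local Open Scope ring_scope.

Lemma surv_ge0 (R : realType) (S : finType) (Sopt : {set S}) (P : S -> S -> R) :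
  (forall X Y, 0 <= P X Y) -> forall t X, 0 <= surv Sopt P t X.
Proof.
move=> P0; elim=> [|t IH] X /=; case: ifP => // _.
by apply: sumr_ge0 => Y _; apply: mulr_ge0.
Qed.

Lemma surv_opt (R : realType) (S : finType) (Sopt : {set S}) (P : S -> S -> R) t X :
  X \in Sopt -> surv Sopt P t X = 0.
Proof. by case: t => [|t] /= ->. Qed.

Lemma ht_opt (R : realType) (S : finType) (Sopt : {set S}) (P : S -> S -> R) X :
  X \in Sopt -> hitting_time Sopt P X = 0%E.
Proof.
move=> H; rewrite /hitting_time eseries0 // => t _ _; by rewrite surv_opt.
Qed.

Lemma ht_step (R : realType) (S : finType) (Sopt : {set S}) (P : S -> S -> R) X :
  (forall X Y, 0 <= P X Y) -> X \notin Sopt ->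
  hitting_time Sopt P X = (1 + \sum_(Y : S) (P X Y)%:E * hitting_time Sopt P Y)%E.
Proof.
move=> P0 Xn; rewrite /hitting_time nneseries_recl //; last first.
  by move=> k _; rewrite lee_fin surv_ge0.
rewrite /= (negbTE Xn); congr (_ + _)%E.
rewrite -nneseries_addn; last by move=> i; rewrite lee_fin surv_ge0.
under eq_eseriesr => i _ do rewrite addn1 /= (negbTE Xn) -sumEFin.
rewrite nneseries_sum; last by move=> Y j _; rewrite lee_fin mulr_ge0 ?surv_ge0.
apply: eq_bigr => Y _.
under eq_eseriesr => i _ do rewrite EFinM.
by rewrite nneseriesZl // => i _; rewrite lee_fin surv_ge0.
Qed.
Fixpoint Gs (R : realType) (S : finType) (Sopt : {set S}) (Q : S -> S -> R)
   (d : S -> R) (n : nat) (X : S) : R :=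
  match n with
  | 0 => if X \in Sopt then 0 else d X
  | n'.+1 => if X \in Sopt then 0 else \sum_(Y : S) Q X Y * Gs Sopt Q d n' Y
  end.

Theorem lemma2 (R : realType) (S : finType) (Sopt : {set S})
    (P1 P2 : S -> S -> R) (pX : S -> R) :
  transition Sopt P1 -> transition Sopt P2 ->
  (forall X, 0 <= pX X <= 1) ->
  (forall X, hitting_time Sopt P1 X \is a fin_num) ->
  (forall X, X \in ~: Sopt ->
     drift Sopt (fun Y => fine (hitting_time Sopt P1 Y)) P1 X =
     drift Sopt (fun Y => fine (hitting_time Sopt P1 Y)) P2 X) ->
  forall X, hitting_time Sopt (mixed_matrix pX P1 P2) X = hitting_time Sopt P1 X.
Proof.
move=> [P10 _] [P20 _] hp hfin hdrift.
set d := fun Y => fine (hitting_time Sopt P1 Y).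
have hd : forall Y, hitting_time Sopt P1 Y = (d Y)%:E by move=> Y; rewrite /d fineK.
have d0 : forall Y, 0 <= d Y.
  move=> Y; rewrite -lee_fin -hd; apply: nneseries_ge0 => t _ _.
  by rewrite lee_fin surv_ge0.
have dopt : forall Y, Y \in Sopt -> d Y = 0.
  by move=> Y HY; rewrite /d ht_opt.
have sumsplit : forall f : S -> R, (forall Y, Y \in Sopt -> f Y = 0) ->
    \sum_(Y in ~: Sopt) f Y = \sum_Y f Y.
  move=> f f0; rewrite big_mkcond; apply: eq_bigr => Y _.
  by rewrite inE; case: ifP => //= /negbFE /f0 ->.
have step : forall P : S -> S -> R, (forall X Y, 0 <= P X Y) -> forall X, X \notin Sopt ->
    d X = 1 + \sum_Y P X Y * d Y -> d X - \sum_(Y in ~: Sopt) P X Y * d Y = 1.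
  move=> P _ X _ ->; rewrite sumsplit; first by rewrite addrK.
  by move=> Y /dopt ->; rewrite mulr0.
have d1 : forall X, X \notin Sopt -> d X = 1 + \sum_Y P1 X Y * d Y.
  move=> X Xn; apply: EFin_inj; rewrite -hd (ht_step P10 Xn) EFinD -sumEFin.
  by congr (_ + _)%E; apply: eq_bigr => Y _; rewrite hd EFinM.
have d2 : forall X, X \notin Sopt -> \sum_Y P2 X Y * d Y = d X - 1.
  move=> X Xn; have := hdrift X; rewrite inE Xn => /(_ isT).
  rewrite /drift -/d.
  rewrite (step _ P10 X Xn (d1 X Xn)) sumsplit; last by move=> Y /dopt; rewrite /d => ->; rewrite mulr0.
  by move=> ->; rewrite opprB addrC subrK.
set Q := mixed_matrix pX P1 P2.
have Q0 : forall X Y, 0 <= Q X Y.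
  move=> X Y; rewrite /Q /mixed_matrix; have /andP[h0 h1] := hp X.
  by rewrite addr_ge0 // mulr_ge0 // subr_ge0.
have dQ : forall X, X \notin Sopt -> d X = 1 + \sum_Y Q X Y * d Y.
  move=> X Xn; rewrite /Q /mixed_matrix.
  under eq_bigr do rewrite mulrDl -!mulrA.
  rewrite big_split -!mulr_sumr /= d2 //.
  have e1 : \sum_Y P1 X Y * d Y = d X - 1 by rewrite (d1 X Xn) addrC addKr.
  rewrite e1; ring.
set F := fun n X => \sum_(t < n) surv Sopt Q t X.
set G := Gs Sopt Q d.
have dec : forall n X, d X = F n X + G n X.
  elim=> [|n IH] X.
    rewrite /F /G /= big_ord0 add0r; case: ifP => // /dopt //.
  rewrite /F /G /=; case: ifPn => XS.
    rewrite addr0 dopt // big1 // => t _; exact: surv_opt.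
  rewrite big_ord_recl /= (negbTE XS).
  rewrite [X in 1 + X + _]exchange_big /= (dQ X XS) -addrA; congr (_ + _).
  rewrite -big_split /=; apply: eq_bigr => Y _.
  rewrite -mulr_sumr -mulrDr (IH Y); done.
set M := \sum_Y d Y.
have M0 : 0 <= M by apply: sumr_ge0.
have Gb : forall n X, 0 <= G n X <= M * surv Sopt Q n X.
  elim=> [|n IH] X; rewrite /G /=; case: ifPn => XS; rewrite ?mulr0 ?lexx //.
    rewrite d0 mulr1 /M (bigD1 X) //= lerDl; apply: sumr_ge0 => *; exact: d0.
  apply/andP; split.
    by apply: sumr_ge0 => Y _; apply: mulr_ge0 => //; case/andP: (IH Y).
  rewrite mulr_sumr; apply: ler_sum => Y _.
  rewrite mulrCA; apply: ler_wpM2l => //; by case/andP: (IH Y).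
move=> X.
have ps : forall n, (\sum_(0 <= t < n) (surv Sopt Q t X)%:E)%E = (F n X)%:E.
  by move=> n; rewrite sumEFin big_mkord.
have s0 : forall t, (0 <= (surv Sopt Q t X)%:E)%E by move=> t; rewrite lee_fin surv_ge0.
have Fd : forall n, F n X <= d X.
  by move=> n; rewrite (dec n X) lerDl; case/andP: (Gb n X).
have up : (hitting_time Sopt Q X <= (d X)%:E)%E.
  rewrite /hitting_time; apply: lime_le.
    by apply: is_cvg_nneseries => n _ _.
  by apply: nearW => n; rewrite ps lee_fin.
have lo : forall n, ((F n X)%:E <= hitting_time Sopt Q X)%E.
  by move=> n; rewrite -ps; apply: nneseries_lim_ge => t _ _.
have h0 : (0 <= hitting_time Sopt Q X)%E by apply: nneseries_ge0 => t _ _.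
have hf : hitting_time Sopt Q X \is a fin_num.
  by rewrite ge0_fin_numE // (le_lt_trans up) // ltry.
set L := fine (hitting_time Sopt Q X).
have hL : hitting_time Sopt Q X = L%:E by rewrite /L fineK.
rewrite hL hd; congr (_%:E).
have FL : forall n, F n X <= L by move=> n; rewrite -lee_fin -hL.
have Ld : L <= d X by rewrite -lee_fin -hL.
set c := d X - L.
have c0 : 0 <= c by rewrite subr_ge0.
have cG : forall n, c <= G n X.
  by move=> n; have := FL n; rewrite /c (dec n X); lra.
have key : forall N, c *+ N <= M * d X.
  move=> N; apply: (@le_trans _ _ (\sum_(n < N) G n X)).
    rewrite -[in X in _ *+ X](card_ord N) -sumr_const; apply: ler_sum => n _; exact: cG.
  apply: (@le_trans _ _ (M * F N X)); last by apply: ler_wpM2l.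
  rewrite /F mulr_sumr; apply: ler_sum => n _; by case/andP: (Gb n X).
have : c <= 0.
  rewrite leNgt; apply/negP => cpos.
  have hb := @archi_boundP _ (M * d X / c) (divr_ge0 (mulr_ge0 M0 (d0 X)) c0).
  have := key (Num.bound (M * d X / c)).
  rewrite -mulr_natl; move: hb; rewrite ltr_pdivrMr // => hb h.
  by have := lt_le_trans hb h; rewrite ltxx.
rewrite /c; lra.
Qed.
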